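(* Let $\{\mathrm{BP}(t): t\ge 0\}$ be the genealogical tree process of the two-type population dependent branching process with parameters $p\in(0,1]$, $q\in[0,1]$ (described in the context), and for $n\ge 2$ let $T_n=\inf\{t\ge 0: n_A(t)+n_B(t)=n\}$. Then $\mathrm{BP}(T_n)\stackrel{d}{=}\mathcal{T}_n$ for each $n\ge 2$, where $\{\mathcal{T}_n\}_{n\ge 2}$ is the two-type Community Modulated Recursive Tree with parameters $p,q$. In fact $\{\mathrm{BP}(T_n)\}_{n\ge 2}\stackrel{d}{=}\{\mathcal{T}_n\}_{n\ge 2}$ as processes.
   Context: Two-type Community Modulated Recursive Tree (CMRT) with parameters $p\in(0,1]$, $q\in[0,1]$: $\mathcal{T}_2$ consists of vertex $1$ of type $A$ and vertex $2$ of type $B$ joined by an edge (the roots of type $A$ and $B$). For $n\ge 3$, $\mathcal{T}_n$ is obtained from $\mathcal{T}_{n-1}$ by adding vertex $n$: (1) vertex $n$ is of type $A$ with probability $p$ and of type $B$ with probability $1-p$; (2) with probability $q$ it decides to connect to a vertex of its own type, and with probability $1-q$ to a vertex of the other type; (3) it connects by an edge to an existing vertex of the selected type chosen uniformly at random. All random choices are independent. Population dependent branching process: a continuous-time process started at time $0$ with two individuals (ancestors), one of type $A$ and one of type $B$; individuals live forever. Let $n_A(t), n_B(t)$ be the numbers of type $A$, $B$ individuals at time $t$ ($n_A(0)=n_B(0)=1$). At time $t$, each type $A$ individual gives birth to type $A$ individuals at rate $q$ and to type $B$ individuals at rate $(1-p)(1-q)/p$; each type $B$ individual gives birth to type $A$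 individuals at rate $\frac{n_A(t)}{n_B(t)}(1-q)$ and to type $B$ individuals at rate $\frac{n_A(t)}{n_B(t)}\cdot\frac{q(1-p)}{p}$ (waiting times between births are exponential with these rates given the current state). $\mathrm{BP}(t)$ is the recursive tree recording the genealogy up to and including time $t$: the type $A$ and type $B$ ancestors are labeled $1$ and $2$ and joined by an edge, every other individual is a vertex labeled by its overall birth order and joined by an edge to its parent. *)

(* Defs.v *)
From HB Require Import structures.
From mathcomp Require Import all_boot all_order all_algebra.
From mathcomp Require Import all_classical all_reals all_analysis.
Set Implicit Arguments. Unset Strict Implicit. Unset Printing Implicit Defensive.
Import Order.TTheory GRing.Theory Num.Theory.
Local Open Scope ring_scope.

(** A (two-type, labeled, rooted recursive) tree on vertices 1..n is encoded as
    a sequence of length n: entry i (0-based, i.e. vertex i+1) is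
    (type, parent) with type = true for A, false for B, and parent the 0-based
    index of the vertex it is attached to.  The two roots are
    vertex 1 (type A) and vertex 2 (type B, attached to vertex 1, which encodes
    the edge between the roots); the parent field of vertex 1 is irrelevant
    and fixed to 0. *)
Definition vstate := seq (bool * nat).

Definition init_state : vstate := [:: (true, 0%N); (false, 0%N)].

Definition nA (x : vstate) : nat := count (fun e => e.1) x.
Definition nB (x : vstate) : nat := count (fun e => ~~ e.1) x.

Definition vtype (x : vstate) (v : nat) : bool := (nth (true, 0%N) x v).1.

Definition step_of (x y : vstate) : bool :=
  [&& size y == (size x).+1, take (size x) y == x &
      ((last (true, 0%N) y).2 < size x)%N].

Definition birth_rate (R : realType) (p q : R) (x : vstate) (c : bool) (v : nat) : R :=
  if vtype x v then (if c then q else (1 - p) * (1 - q) / p)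
  else (nA x)%:R / (nB x)%:R * (if c then 1 - q else q * (1 - p) / p).

Definition total_rate (R : realType) (p q : R) (x : vstate) : R :=
  \sum_(v < size x) \sum_(c : bool) birth_rate p q x c v.

Definition bp_rate (R : realType) (p q : R) (x y : vstate) : R :=
  if step_of x y then birth_rate p q x (last (true, 0%N) y).1 (last (true, 0%N) y).2
  else 0.

Definition bp_jump_prob (R : realType) (p q : R) (x y : vstate) : R :=
  bp_rate p q x y / total_rate p q x.

(** jump times: J_k = S_0 + ... + S_{k-1}, S_k = holding time in the k-th state *)
Definition jump_time (R : realType) (T : Type) (S : nat -> T -> R) (k : nat) (w : T) : R :=
  \sum_(i < k) S i w.

(** CMRT transition probability from T_{n-1} = x to T_n = y: the new vertex
    has type c (prob p or 1-p), chooses the type of v (same type with prob q,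
    other type with prob 1-q), and v uniformly among vertices of that type. *)
Definition cmrt_step (R : realType) (p q : R) (x y : vstate) : R :=
  if step_of x y then
    let c := (last (true, 0%N) y).1 in
    let v := (last (true, 0%N) y).2 in
    (if c then p else 1 - p) * (if vtype x v == c then q else 1 - q)
      / (count (fun e => e.1 == vtype x v) x)%:R
  else 0.

(* Main.v *)
Require Import Defs.
From HB Require Import structures.
From mathcomp Require Import all_boot all_order all_algebra.
From mathcomp Require Import all_classical all_reals all_analysis.
From mathcomp Require Import ring lra zify.
Import Order.TTheory GRing.Theory Num.Theory.
Local Open Scope classical_set_scope.
Local Open Scope ring_scope.

Lemma sum_type (R : realType) (x : vstate) (a b : R) :
  \sum_(v < size x) (if vtype x v then a else b) = (nA x)%:R * a + (nB x)%:R * b.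
Proof.
rewrite -(big_mkord xpredT (fun v => if vtype x v then a else b)).
rewrite /vtype -(big_nth (true, 0%N) xpredT (fun e : bool * nat => if e.1 then a else b)).
elim: x => [|e x IH]; first by rewrite big_nil /nA /nB /= !mul0r addr0.
rewrite big_cons IH /nA /nB /=; case: e.1 => /=; rewrite ?add0n ?add1n -?natr1; ring.
Qed.

Definition good (x : vstate) := (0 < nA x)%N && (0 < nB x)%N.

Lemma total_rateE (R : realType) (p q : R) x : p != 0 -> good x ->
  total_rate p q x = (nA x)%:R / p.
Proof.
move=> p0 /andP[hA hB].
rewrite /total_rate.
under eq_bigr => v _ do rewrite big_bool.
have -> : \sum_(i < size x) (birth_rate p q x true i + birth_rate p q x false i)
  = \sum_(i < size x) (if vtype x i then q + (1 - p) * (1 - q) / p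
       else (nA x)%:R / (nB x)%:R * (1 - q + q * (1 - p) / p)).
  by apply: eq_bigr => i _; rewrite /birth_rate; case: (vtype x i) => //=; ring.
rewrite sum_type.
have hB' : (nB x)%:R != 0 :> R by rewrite pnatr_eq0 -lt0n.
by field; apply/andP; split.
Qed.

Lemma step_rcons (x y : vstate) : step_of x y -> y = rcons x (last (true, 0%N) y).
Proof.
case/and3P => /eqP hs /eqP ht _.
have : y = take (size x) y ++ drop (size x) y by rewrite cat_take_drop.
rewrite ht => hy; rewrite {1}hy -cats1; congr (_ ++ _).
case: (lastP y) hs hy => [//|s e] hs _.
rewrite size_rcons in hs; case: hs => hs.
by rewrite -hs drop_rcons // drop_size last_rcons.
Qed.

Lemma good_step x y : step_of x y -> good x -> good y.
Proof.
move=> /step_rcons -> /andP[hA hB].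
by rewrite /good /nA /nB -!cats1 !count_cat /=; apply/andP; split; apply: leq_trans (leq_addr _ _).
Qed.

Lemma bp_cmrt (R : realType) (p q : R) x y : p != 0 -> good x ->
  bp_jump_prob p q x y = cmrt_step p q x y.
Proof.
move=> p0 gx; rewrite /bp_jump_prob /bp_rate /cmrt_step (@total_rateE R p q x p0 gx).
case: (step_of x y); last by rewrite mul0r.
case/andP: gx => hA hB.
have hA' : (nA x)%:R != 0 :> R by rewrite pnatr_eq0 -lt0n.
have hB' : (nB x)%:R != 0 :> R by rewrite pnatr_eq0 -lt0n.
set c := (last _ y).1; set v := (last _ y).2.
rewrite /birth_rate.
have cA : count (fun e : bool * nat => e.1 == true) x = nA x.
  by apply: eq_count => e; rewrite eqb_id.
have cB : count (fun e : bool * nat => e.1 == false) x = nB x.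
  by apply: eq_count => e; rewrite eqbF_neg.
case: (vtype x v); case: c => /=; rewrite ?cA ?cB /=; field; rewrite ?hA' ?hB' ?p0 //.
Qed.

Lemma prod_eq (R : realType) (p q : R) (xs : nat -> vstate) m : p != 0 ->
  (xs 2%N == init_state)%:R * \prod_(i < m) bp_jump_prob p q (xs i.+2) (xs i.+3)
  = (xs 2%N == init_state)%:R * \prod_(i < m) cmrt_step p q (xs i.+2) (xs i.+3).
Proof.
move=> p0; case: eqP => [h|_]; last by rewrite !mul0r.
rewrite !mul1r.
suff: \prod_(i < m) bp_jump_prob p q (xs i.+2) (xs i.+3)
  = \prod_(i < m) cmrt_step p q (xs i.+2) (xs i.+3) /\
  (\prod_(i < m) cmrt_step p q (xs i.+2) (xs i.+3) != 0 -> good (xs m.+2)) by case.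
elim: m => [|m [e g]]; first by rewrite !big_ord0 h.
rewrite !big_ord_recr /= e.
case: (eqVneq (\prod_(i < m) cmrt_step p q (xs i.+2) (xs i.+3)) 0) => [z|nz].
  by rewrite z !mul0r eqxx.
rewrite (@bp_cmrt R p q _ _ p0 (g nz)); split => // hnz.
have : cmrt_step p q (xs m.+2) (xs m.+3) != 0 by move: hnz; rewrite mulf_eq0 negb_or => /andP[].
rewrite /cmrt_step; case hs: (step_of _ _); last by rewrite eqxx.
by move=> _; apply: good_step hs (g nz).
Qed.

Lemma loc (R : realType) (S : nat -> R) m t : (forall k, 0 < S k) ->
  0 <= t < \sum_(i < m) S i -> exists k, (k < m)%N /\ \sum_(i < k) S i <= t < \sum_(i < k.+1) S i.
Proof.
move=> Sp; elim: m => [|m IH]; first by rewrite big_ord0; lra.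
move=> /andP[t0 tm].
case: (ltP t (\sum_(i < m) S i)) => h.
  by case: IH => [|k [km hk]]; [rewrite t0 h | exists k; split => //; apply: ltnW].
by exists m; split => //; rewrite h tm.
Qed.

Lemma Tn_eq (R : realType) (S : nat -> R) (B : R -> vstate) (Yk : nat -> vstate) n :
 (forall k, 0 < S k) -> (forall k, size (Yk k) = k.+2) ->
 (forall k t, \sum_(i < k) S i <= t < \sum_(i < k.+1) S i -> B t = Yk k) -> (2 <= n)%N ->
 inf [set t | 0 <= t /\ size (B t) = n] = \sum_(i < n - 2) S i.
Proof.
move=> Sp hs hB n2.
have mono : forall k, \sum_(i < k) S i < \sum_(i < k.+1) S i.
  by move=> k; rewrite big_ord_recr /= ltrDl.
have ge0 : forall k, 0 <= \sum_(i < k) S i by move=> k; apply: sumr_ge0 => i _; apply: ltW.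
have inE : [set t | 0 <= t /\ size (B t) = n] (\sum_(i < n - 2) S i).
  split; first exact: ge0.
  rewrite (hB (n - 2)%N); first by rewrite hs; lia.
  by rewrite lexx mono.
have lb : lbound [set t | 0 <= t /\ size (B t) = n] (\sum_(i < n - 2) S i).
  move=> t [t0 st]; rewrite leNgt; apply/negP => tl.
  case: (@loc R S (n - 2)%N t Sp); first by rewrite t0 tl.
  move=> k [km hk]; move: st; rewrite (hB k t hk) hs; lia.
apply/eqP; rewrite eq_le; apply/andP; split.
  by apply: (ge_inf (ex_intro _ _ lb)).
by apply: lb_le_inf => //; exists (\sum_(i < n - 2) S i).
Qed.

Lemma sum_squeeze (R : realType) (V : eqType) (S : seq V) (a b : V -> R) : uniq S ->
  (forall v, v \in S -> a v <= b v) -> \sum_(v <- S) b v <= 1 -> \sum_(v <- S) a v = 1 ->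
  forall v, v \in S -> a v = b v.
Proof.
move=> uS hab hb ha v vS.
have h0 : \sum_(u <- S) (b u - a u) <= 0 by rewrite sumrB ha; lra.
rewrite (bigD1_seq v) //= in h0.
have h1 : 0 <= \sum_(u <- S | u != v) (b u - a u).
  rewrite big_seq_cond; apply: sumr_ge0 => u /andP[uS0 _]; rewrite subr_ge0; exact: hab.
have := hab v vS; lra.
Qed.

Lemma measure_seq d (T : measurableType d) (R : realType) (mu : {measure set T -> \bar R})
  (V : eqType) (f : T -> V) (S : seq V) :
  uniq S -> (forall v, measurable (f @^-1` [set v])) ->
  measurable [set w | f w \in S] /\
  mu [set w | f w \in S] = (\sum_(v <- S) mu (f @^-1` [set v]))%E.
Proof.
move=> uS hm; elim: S uS => [|v S IH] /=.
  have -> : [set w | f w \in [::]] = set0 by apply/seteqP; split => w //=.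
  by rewrite measure0 big_nil.
move=> /andP[vS uS]; case: (IH uS) => mS eS.
have -> : [set w | f w \in v :: S] = f @^-1` [set v] `|` [set w | f w \in S].
  apply/seteqP; split => w /=; rewrite in_cons.
    by case/orP => [/eqP ->|h]; [left | right].
  by case => [->|->]; rewrite ?eqxx ?orbT.
split; first exact: measurableU.
rewrite measureU //; first by rewrite big_cons -eS.
apply/seteqP; split => w //= [fw] ; rewrite fw => /negP; by move: vS => /negP.
Qed.

Fixpoint allseqs (n m : nat) : seq vstate :=
  if n is n'.+1 then
    [seq e :: s | e <- [seq (b, v) | b <- [:: true; false], v <- iota 0 m], s <- allseqs n' m]
  else [:: [::]].

Lemma mem_allseqs (s : vstate) m : all (fun e : bool * nat => (e.2 < m)%N) s ->
  s \in allseqs (size s) m.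
Proof.
elim: s => [|[b v] s IH]; first by []. move=> /andP[vm hs]; change (size ((b, v) :: s)) with (size s).+1; rewrite [allseqs _ _]/allseqs -/allseqs.
apply/allpairsP; exists ((b, v), s); split => //; last exact: IH.
apply/allpairsP; exists (b, v); split => //=; last by rewrite mem_iota.
by case: (b).
Qed.

Lemma meas_path d (T : measurableType d) (F : nat -> set T) m :
  (forall k, measurable (F k)) -> measurable [set w | forall k, (k < m)%N -> F k w].
Proof.
move=> hF; elim: m => [|m IH].
  have -> : [set w | forall k, (k < 0)%N -> F k w] = setT by apply/seteqP; split.
  exact: measurableT.
have -> : [set w | forall k, (k < m.+1)%N -> F k w]
   = [set w | forall k, (k < m)%N -> F k w] `&` F m.
  apply/seteqP; split => w /=.
    by move=> h; split; [move=> k km; apply: h; apply: ltnW | apply: h].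
  by case=> h hm k; rewrite ltnS leq_eqVlt => /orP[/eqP ->|]; [ | apply: h].
exact: measurableI.
Qed.

Lemma probE d (T : measurableType d) (R : realType) (P : probability T R) A :
  measurable A -> P A = (fine (P A))%:E.
Proof.
move=> mA; rewrite fineK // ge0_fin_numE ?measure_ge0 //.
by apply: le_lt_trans (probability_le1 P mA) _; apply: ltey.
Qed.
Theorem lemma2p1 (R : realType) (p q : R) (hp : 0 < p <= 1) (hq : 0 <= q <= 1)
  (d : measure_display) (Omega : measurableType d) (P : probability Omega R)
  (Y : nat -> Omega -> vstate) (Hold : nat -> Omega -> R) (BP : R -> Omega -> vstate)
  (hYm : forall k y, measurable (Y k @^-1` [set y]))
  (hSm : forall k, measurable_fun setT (Hold k))
  (hY0 : forall w, Y 0%N w = init_state)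
  (hYstep : forall k w, exists c v, (v < size (Y k w))%N /\ Y k.+1 w = rcons (Y k w) (c, v))
  (hSpos : forall k w, 0 < Hold k w)
  (hlaw : forall (k : nat) (ys : nat -> vstate) (ss : nat -> R), (forall i, 0 <= ss i) ->
     P [set w | (forall i, (i <= k)%N -> Y i w = ys i) /\
                (forall i, (i < k)%N -> ss i < Hold i w)]
     = ((ys 0%N == init_state)%:R *
        \prod_(i < k) (bp_jump_prob p q (ys i) (ys i.+1)
                        * expR (- total_rate p q (ys i) * ss i)))%:E)
  (hBP : forall w k t, jump_time Hold k w <= t < jump_time Hold k.+1 w -> BP t w = Y k w)
  (d' : measure_display) (Omega' : measurableType d') (P' : probability Omega' R)
  (Tr : nat -> Omega' -> vstate)
  (hTrm : forall k x, measurable (Tr k @^-1` [set x]))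
  (hTr : forall (n : nat) (xs : nat -> vstate), (2 <= n)%N ->
     P' [set w | forall k, (2 <= k <= n)%N -> Tr k w = xs k]
     = ((xs 2%N == init_state)%:R *
        \prod_(3 <= k < n.+1) cmrt_step p q (xs k.-1) (xs k))%:E) :
  let Tn (n : nat) (w : Omega) := inf [set t | 0 <= t /\ size (BP t w) = n] in
  (forall (n : nat) (x : vstate), (2 <= n)%N ->
     P [set w | BP (Tn n w) w = x] = P' [set w | Tr n w = x]) /\
  (forall (n : nat) (xs : nat -> vstate), (2 <= n)%N ->
     P [set w | forall k, (2 <= k <= n)%N -> BP (Tn k w) w = xs k]
     = P' [set w | forall k, (2 <= k <= n)%N -> Tr k w = xs k]).
Proof.
move=> Tn.
have p0 : p != 0 by case/andP: hp => h _; rewrite gt_eqF.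
have hsz : forall k w, size (Y k w) = k.+2.
  elim=> [|k IH] w; first by rewrite hY0.
  by case: (hYstep k w) => c [v [_ ->]]; rewrite size_rcons IH.
have hall : forall k w, all (fun e : bool * nat => (e.2 < k.+2)%N) (Y k w).
  elim=> [|k IH] w; first by rewrite hY0.
  case: (hYstep k w) => c [v [hv ->]]; rewrite all_rcons /=; move: hv; rewrite hsz => hv; rewrite ltnW //=.
  by apply: sub_all (IH w) => e /= h; apply: ltnW.
have hpre : forall k i w, (i <= k)%N -> Y i w = take i.+2 (Y k w).
  move=> k i w; elim: k => [|k IH] hik.
    by move: hik; rewrite leqn0 => /eqP ->; rewrite take_oversize // hsz.
  move: hik; rewrite leq_eqVlt => /orP[/eqP ->|hik]; first by rewrite take_oversize // hsz.
  case: (hYstep k w) => c [v [_ ->]]; rewrite -cats1 takel_cat ?hsz //; first exact: IH.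
have HT : forall n w, (2 <= n)%N -> BP (Tn n w) w = Y (n - 2)%N w.
  move=> n w n2; rewrite /Tn (@Tn_eq R (fun i => Hold i w) (fun t => BP t w) (fun k => Y k w) n
     (fun k => hSpos k w) (fun k => hsz k w) (fun k t h => hBP w k t h) n2).
  apply: hBP; rewrite /jump_time lexx /= big_ord_recr /= ltrDl; exact: hSpos.
have joint : forall n xs, (2 <= n)%N ->
    P [set w | forall k, (2 <= k <= n)%N -> BP (Tn k w) w = xs k]
    = ((xs 2%N == init_state)%:R * \prod_(i < n - 2) cmrt_step p q (xs i.+2) (xs i.+3))%:E.
  move=> n xs n2.
  have -> : [set w | forall k, (2 <= k <= n)%N -> BP (Tn k w) w = xs k]
     = [set w | (forall i, (i <= n - 2)%N -> Y i w = (fun i => xs i.+2) i) /\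
                (forall i, (i < n - 2)%N -> (fun _ => 0 : R) i < Hold i w)].
    apply/seteqP; split => w /=.
      move=> h; split; last by move=> i _; apply: hSpos.
      move=> i hi; have hk : (2 <= i.+2 <= n)%N by lia.
      by have := h _ hk; rewrite HT //; have -> : (i.+2 - 2 = i)%N by lia.
    case=> h _ k hk; rewrite HT; last by lia.
    have := h (k - 2)%N; have -> : (k - 2).+2 = k by lia.
    by apply; lia.
  rewrite (hlaw (n - 2)%N (fun i => xs i.+2) (fun=> 0)) //.
  congr (_%:E); rewrite -(@prod_eq R p q _ _ p0); congr (_ * _).
  by apply: eq_bigr => i _; rewrite mulr0 expR0 mulr1.
have hTr2 : forall n xs, (2 <= n)%N ->
    P' [set w | forall k, (2 <= k <= n)%N -> Tr k w = xs k]
    = ((xs 2%N == init_state)%:R * \prod_(i < n - 2) cmrt_step p q (xs i.+2) (xs i.+3))%:E.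
  move=> n xs n2; rewrite hTr //; congr (_%:E); congr (_ * _).
  rewrite (big_addn 0 n.+1 3) big_mkord.
  have -> : (n.+1 - 3 = n - 2)%N by lia.
  by apply: eq_bigr => i _; rewrite addn3.
split; last by move=> n xs n2; rewrite joint // hTr2.
move=> n x n2.
have -> : [set w | BP (Tn n w) w = x] = Y (n - 2)%N @^-1` [set x].
  by apply/seteqP; split => w /=; rewrite HT.
set S := undup (x :: allseqs n n).
pose a v := fine (P (Y (n - 2)%N @^-1` [set v])).
pose b v := fine (P' (Tr n @^-1` [set v])).
suff : a x = b x.
  by rewrite /a /b => h; rewrite (@probE _ _ _ P _ (hYm _ _)) (@probE _ _ _ P' _ (hTrm _ _)) h.
apply: (@sum_squeeze R _ S); [exact: undup_uniq | | | | by rewrite mem_undup mem_head].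
- move=> v _.
  case: (eqVneq (size v) n) => sv.
  + have eY : Y (n - 2)%N @^-1` [set v]
        = [set w | forall k, (2 <= k <= n)%N -> BP (Tn k w) w = take k v].
      apply/seteqP; split => w /=.
        move=> hv k hk; rewrite HT; last by lia.
        rewrite (hpre (n - 2)%N (k - 2)%N w); last by lia.
        by rewrite hv; congr take; lia.
      by move=> h; have := h n; rewrite HT // take_oversize ?sv //; apply; rewrite n2 leqnn.
    rewrite /a /b eY joint // -(hTr2 n (fun k => take k v) n2).
    have mpath : measurable [set w | forall k, (2 <= k <= n)%N -> Tr k w = take k v].
      have -> : [set w | forall k, (2 <= k <= n)%N -> Tr k w = take k v]
         = [set w | forall k, (k < n.+1)%N ->
              (if (2 <= k)%N then Tr k @^-1` [set take k v] else setT) w].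
        apply/seteqP; split => w /= h k.
          by move=> kn; case: ifP => // k2; apply: h; rewrite k2; lia.
        by move=> hk; have := h k; rewrite ifT; [apply; lia | lia].
      apply: meas_path => k; case: ifP => _; [exact: hTrm | exact: measurableT].
    have sub : [set w | forall k, (2 <= k <= n)%N -> Tr k w = take k v] `<=` Tr n @^-1` [set v].
      by move=> w /= h; have := h n; rewrite take_oversize ?sv //; apply; rewrite n2 leqnn.
    have hle := le_measure P' (mem_set mpath) (mem_set (hTrm n v)) sub.
    by rewrite -lee_fin -(@probE _ _ _ P' _ mpath) -(@probE _ _ _ P' _ (hTrm n v)).
  + rewrite /a; have -> : Y (n - 2)%N @^-1` [set v] = set0.
      apply/seteqP; split => w //= hw; move: sv; rewrite -hw hsz.
      have e2 : (n - 2).+2 = n by lia.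
      by rewrite e2 eqxx.
    by rewrite measure0 /=; apply: fine_ge0; apply: measure_ge0.
- have [mS eS] := @measure_seq _ _ _ P' _ (Tr n) _ (undup_uniq (x :: allseqs n n)) (hTrm n).
  rewrite -lee_fin -sumEFin.
  under eq_bigr => v _ do rewrite -(@probE _ _ _ P' _ (hTrm n v)).
  by rewrite -eS; apply: probability_le1.
- have [mS eS] := @measure_seq _ _ _ P _ (Y (n - 2)%N) _ (undup_uniq (x :: allseqs n n)) (hYm _).
  apply: EFin_inj; rewrite -sumEFin.
  under eq_bigr => v _ do rewrite -(@probE _ _ _ P _ (hYm _ v)).
  rewrite -eS.
  have -> : [set w | Y (n - 2)%N w \in S] = setT.
    apply/seteqP; split => w // _; rewrite /= /S mem_undup in_cons; apply/orP; right.
    have e2 : (n - 2).+2 = n by lia.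
    move: (hall (n - 2)%N w) (hsz (n - 2)%N w); rewrite e2 => ha hs.
    by have := @mem_allseqs _ n ha; rewrite hs.
  exact: probability_setT.
Qed.
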